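(* Let $A:\mathbb{R}^n\rightrightarrows\mathbb{R}^n$ be a maximally monotone symmetric linear relation, $a,b\in\mathbb{R}^n$, $c\in\mathbb{R}$, $r>0$, and define the generalized linear-quadratic function $$f(x)=\frac r2\langle x-a,A(x-a)\rangle+\langle b,x\rangle+c$$ (with $f(x)=\infty$ when $x-a\notin\operatorname{dom}A$). Then for every $x\in\mathbb{R}^n$, $$e_rf(x)=r\,q_{(\operatorname{Id}+A^{-1})^{-1}}\Big(x-a-\frac br\Big)+\langle b,x\rangle-\frac1r q(b)+c.$$
   Context: A linear relation is an operator $A:\mathbb{R}^n\rightrightarrows\mathbb{R}^n$ whose graph $\{(x,x^* ):x^*\in Ax\}$ is a linear subspace of $\mathbb{R}^n\times\mathbb{R}^n$. $A$ is monotone if $\langle x^*-y^*,x-y\rangle\ge0$ for all $(x,x^* ),(y,y^* )$ in its graph, maximally monotone if no monotone operator has a strictly larger graph, and symmetric if $\langle x,y^*\rangle=\langle y,x^*\rangle$ for all $(x,x^* ),(y,y^* )\in\operatorname{gra}A$. $A^{-1}$ is the set-valued inverse. For a monotone linear relation $B$, $q_B(x)=\frac12\langle x,Bx\rangle$ if $x\in\operatorname{dom}B$ (single-valued) and $\infty$ otherwise. $q=\frac12\|\cdot\|^2$. The Moreau envelope is $e_rf(x)=\inf_y\{f(y)+\frac r2\|y-x\|^2\}$. *)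

(* Defs.v *)
From mathcomp Require Import all_boot all_order all_algebra.
From mathcomp Require Import all_classical all_reals ereal.
Set Implicit Arguments. Unset Strict Implicit. Unset Printing Implicit Defensive.
Import Order.TTheory GRing.Theory Num.Theory.
Local Open Scope classical_set_scope.
Local Open Scope ring_scope.

Section Defs.
Variables (R : realType) (n : nat).
Local Notation V := 'rV[R]_n.

Definition dot (u v : V) : R := \sum_(i < n) u 0 i * v 0 i.

Definition qn (v : V) : R := 2^-1 * dot v v.

(* set-valued operators on R^n, given by their graph: rel x x* means x* \in A x *)
Definition relation := V -> V -> Prop.

Definition linear_relation (A : relation) : Prop :=
  A 0 0 /\
  (forall x xs y ys, A x xs -> A y ys -> A (x + y) (xs + ys)) /\
  (forall (k : R) x xs, A x xs -> A (k *: x) (k *: xs)).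

Definition mono_rel (A : relation) : Prop :=
  forall x xs y ys, A x xs -> A y ys -> 0 <= dot (xs - ys) (x - y).

Definition max_mono_rel (A : relation) : Prop :=
  mono_rel A /\
  forall B : relation, mono_rel B -> (forall x xs, A x xs -> B x xs) ->
    forall x xs, B x xs -> A x xs.

Definition symmetric_rel (A : relation) : Prop :=
  forall x xs y ys, A x xs -> A y ys -> dot x ys = dot y xs.

Definition dom (A : relation) : set V := [set x | exists xs, A x xs].

Definition rinv (A : relation) : relation := fun x xs => A xs x.

Definition id_plus (A : relation) : relation :=
  fun x y => exists z, A x z /\ y = x + z.

(* q_B(x) = 1/2 <x, Bx> if x \in dom B (independent of the chosen element of
   Bx for a mono_rel linear relation), +oo otherwise *)
Definition qB (B : relation) (x : V) : \bar R :=
  if pselect (dom B x) then (2^-1 * dot x (xget 0 [set y | B x y]))%:E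
  else +oo%E.

Definition moreau_env (r : R) (f : V -> \bar R) (x : V) : \bar R :=
  ereal_inf [set (f y + (r / 2 * dot (y - x) (y - x))%:E)%E | y in [set: V]].

End Defs.

(* Main.v *)
Require Import Defs.
From mathcomp Require Import all_boot all_order all_algebra.
From mathcomp Require Import all_classical all_reals ereal.
From mathcomp Require Import lra ring.
Import Order.TTheory GRing.Theory Num.Theory.
Local Open Scope classical_set_scope.
Local Open Scope ring_scope.

Section Dot.
Context {R : realType} {n : nat}.
Implicit Types u v w : 'rV[R]_n.

Lemma dotC u v : dot u v = dot v u.
Proof. by apply: eq_bigr => i _; rewrite mulrC. Qed.
Lemma dotDl u v w : dot (u + v) w = dot u w + dot v w.
Proof. by rewrite /dot -big_split; apply: eq_bigr => i _; rewrite mxE mulrDl. Qed.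
Lemma dotZl (k : R) u w : dot (k *: u) w = k * dot u w.
Proof. by rewrite /dot mulr_sumr; apply: eq_bigr => i _; rewrite mxE mulrA. Qed.
Lemma dotNl u w : dot (- u) w = - dot u w.
Proof. by rewrite -scaleN1r dotZl mulN1r. Qed.
Lemma dotBl u v w : dot (u - v) w = dot u w - dot v w.
Proof. by rewrite dotDl dotNl. Qed.
Lemma dotDr u v w : dot w (u + v) = dot w u + dot w v.
Proof. by rewrite dotC dotDl !(dotC w). Qed.
Lemma dotZr (k : R) u w : dot w (k *: u) = k * dot w u.
Proof. by rewrite dotC dotZl dotC. Qed.
Lemma dotNr u w : dot w (- u) = - dot w u.
Proof. by rewrite dotC dotNl dotC. Qed.
Lemma dotBr u v w : dot w (u - v) = dot w u - dot w v.
Proof. by rewrite dotDr dotNr. Qed.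
Lemma dot0l u : dot 0 u = 0.
Proof. by rewrite -(scale0r 0) dotZl mul0r. Qed.
Lemma dot0r u : dot u 0 = 0.
Proof. by rewrite dotC dot0l. Qed.
Lemma dot_ge0 u : 0 <= dot u u.
Proof. by apply: sumr_ge0 => i _; by rewrite -expr2 sqr_ge0. Qed.
Lemma dot_eq0 u : dot u u = 0 -> u = 0.
Proof.
move=> /eqP; rewrite psumr_eq0; last by move=> i _; by rewrite -expr2 sqr_ge0.
move=> /allP H; apply/rowP => i; rewrite mxE.
by have /(_ (mem_index_enum i)) := H i; rewrite implyTb mulf_eq0 orbb => /eqP.
Qed.
Lemma dot_mx u v : dot u v = (u *m v^T) 0 0.
Proof. by rewrite mxE; apply: eq_bigr => i _; rewrite mxE. Qed.
End Dot.

Section Minty.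
Variables (R : realType) (n : nat) (A : relation R n).
Hypotheses (linA : linear_relation A) (maxA : max_mono_rel A).

Let S (u : 'rV[R]_n) := exists z v, A z v /\ u = v + z.

Let S0 : S 0.
Proof. by exists 0, 0; split; [case: linA|rewrite addr0]. Qed.
Let SD u1 u2 : S u1 -> S u2 -> S (u1 + u2).
Proof.
move=> [z1 [v1 [h1 ->]]] [z2 [v2 [h2 ->]]]; exists (z1 + z2), (v1 + v2); split.
  by case: linA => _ [+ _]; apply.
by rewrite addrACA.
Qed.
Let SZ k u : S u -> S (k *: u).
Proof.
move=> [z [v [h ->]]]; exists (k *: z), (k *: v); split.
  by case: linA => _ [_]; apply.
by rewrite scalerDr.
Qed.

Let Sspan m (D : 'rV_m) (M : 'M_(m, n)) : (forall i, S (row i M)) -> S (D *m M).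
Proof.
move=> H; rewrite mulmx_sum_row; apply: (big_ind S S0 SD).
by move=> i _; apply: SZ.
Qed.

Let grow k : (k <= n.+1)%N -> exists m (M : 'M[R]_(m, n)),
  (forall i, S (row i M)) /\ ((forall s, S s -> (s <= M)%MS) \/ (k <= \rank M)%N).
Proof.
elim: k => [|k IH] hk.
  by exists 0%N, 0; split=> [[]//|]; right.
have [m [M [HM [Hs|Hk]]]] := IH (ltnW hk); first by exists m, M; split=> //; left.
have [Hs|] := pselect (forall s, S s -> (s <= M)%MS); first by exists m, M; split=> //; left.
move=> /existsNP [s /not_implyP [Ss Hn]].
exists (m + 1)%N, (col_mx M s); split.
  move=> i; rewrite -(splitK i); case: (fintype.split i) => j /=.
    by rewrite rowKu.
  by rewrite rowKd ord1 row_id.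
right; apply: leq_ltn_trans Hk _.
have h := addsmxSl M s; rewrite addsmxE in h.
have := mxrank_leqif_sup h; move/ltn_leqif => ->.
by rewrite col_mx_sub submx_refl /=; apply/negP.
Qed.

Lemma minty u : S u.
Proof.
have [m [M [HM [Hs|Hk]]]] := @grow n.+1 (leqnn n.+1); last first.
  by have := rank_leq_col M; rewrite leqNgt Hk.
have [Mf|Mnf] := boolP (row_full M).
  by have /submxP [D ->] := submx_full u Mf; apply: Sspan.
have rk : (\rank M < n)%N by rewrite ltn_neqAle rank_leq_col andbT.
set K := kermx M^T.
have rK : (0 < \rank K)%N by rewrite mxrank_ker mxrank_tr subn_gt0.
have [i Ki] : exists i, row i K != 0.
  case: (pselect (exists i, row i K != 0)) => // H; exfalso.
  move: rK; suff -> : K = 0 by rewrite mxrank0.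
  apply/row_matrixP => i; rewrite row0; apply/eqP; apply/negPn/negP => hi.
  by apply: H; exists i.
set w := row i K.
have wM : w *m M^T = 0 by rewrite /w -row_mul mulmx_ker row0.
have wS s : S s -> dot w s = 0.
  move=> /Hs /submxP [D ->]; rewrite dot_mx trmx_mul mulmxA wM mul0mx mxE.
  by [].
have Az0 z v : A z v -> 0 <= dot v z.
  move=> h; have := maxA.1 _ _ _ _ h (proj1 linA).
  by rewrite !subr0.
have key z v : A z v -> dot w v + dot w z = 0.
  by move=> h; rewrite -dotDr; apply: wS; exists z, v.
pose B' x xs := A x xs \/ (x = w /\ xs = w).
have mB' : mono_rel B'.
  move=> x xs y ys [h1|[-> ->]] [h2|[-> ->]].
  - exact: maxA.1 h1 h2.
  - have := Az0 _ _ h1; have := key _ _ h1; have := dot_ge0 w.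
    rewrite !(dotBl, dotBr) (dotC xs w); lra.
  - have := Az0 _ _ h2; have := key _ _ h2; have := dot_ge0 w.
    rewrite !(dotBl, dotBr) (dotC ys w); lra.
  - by rewrite subrr dot0l.
have Aww : A w w by apply: (maxA.2 B' mB') => //; [move=> ? ? ?; left|right].
have := key _ _ Aww; rewrite -mulr2n => /eqP; rewrite mulrn_eq0 /= => /eqP /dot_eq0.
by move/eqP: Ki.
Qed.
End Minty.

Lemma qB_val (R : realType) n (B : relation R n) x xs :
  linear_relation B -> mono_rel B -> B x xs -> qB B x = (2^-1 * dot x xs)%:E.
Proof.
move=> [B0 [BD BZ]] mB hx; rewrite /qB.
case: pselect => [hd|]; last by case; exists xs.
set ys := xget _ _.
have hy : B x ys by apply: xgetPex.
congr ((_ * _)%:E).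
have hd0 : B 0 (ys - xs).
  by have := BD _ _ _ _ hy (BZ (-1) _ _ hx); rewrite !scaleN1r subrr.
set e := dot (ys - xs) x.
have ht t : t * e <= dot xs x.
  have := mB _ _ _ _ (BZ t _ _ hd0) hx.
  rewrite scaler0 sub0r dotNr dotBl dotZl /e; lra.
have e0 : e = 0.
  apply/eqP; apply/negPn/negP => he.
  have := ht (e^-1 * (dot xs x + 1)); rewrite mulrAC mulVf // mul1r; lra.
by move: e0; rewrite /e dotBl (dotC ys) (dotC xs) => /eqP; rewrite subr_eq0 => /eqP.
Qed.

Lemma key_id (R : realType) n (r c : R) (p ps z v a b x : 'rV[R]_n) : r != 0 ->
 dot ps z = dot p v -> x - a - r^-1 *: b = v + z ->
 r * (2^-1 * dot p ps) + (dot b (p + a) + c) + r / 2 * dot (p + a - x) (p + a - x)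
 - (r * (2^-1 * dot (x - a - r^-1 *: b) v) + (dot b x - r^-1 * qn b + c))
 = r / 2 * (dot (p - z) (ps - v) + dot (p - z) (p - z)).
Proof.
move=> r0 sym hx; rewrite hx.
have -> : x = v + z + a + r^-1 *: b by rewrite -hx addrAC !subrK.
rewrite /qn !(dotDl, dotDr, dotBl, dotBr, dotZl, dotZr, dotNl, dotNr).
rewrite ?[dot ps p]dotC ?[dot z p]dotC ?[dot v p]dotC ?[dot a p]dotC ?[dot b p]dotC.
rewrite ?[dot z ps]dotC ?[dot v ps]dotC ?[dot a ps]dotC ?[dot b ps]dotC.
rewrite ?[dot v z]dotC ?[dot a z]dotC ?[dot b z]dotC.
rewrite ?[dot a v]dotC ?[dot b v]dotC ?[dot b a]dotC.
rewrite sym.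
field. all: done.
Qed.

Arguments minty {R n A}. Arguments qB_val {R n B x xs}.

Theorem theorem4p46 (R : realType) (n : nat) (A : relation R n)
  (a b : 'rV[R]_n) (c r : R) :
  linear_relation A -> max_mono_rel A -> symmetric_rel A -> 0 < r ->
  let f : 'rV[R]_n -> \bar R :=
    fun x => (r%:E * qB A (x - a) + (dot b x + c)%:E)%E in
  forall x : 'rV[R]_n,
    moreau_env r f x =
    (r%:E * qB (rinv (id_plus (rinv A))) (x - a - r^-1 *: b)
       + (dot b x - r^-1 * qn b + c)%:E)%E.
Proof.
move=> linA maxA symA r0 f x.
have r0' : r != 0 by rewrite gt_eqF.
have [z [v [Azv hu]]] := minty linA maxA (x - a - r^-1 *: b).
have linB : linear_relation (rinv (id_plus (rinv A))).
  case: linA => [A0 [AD AZ]]; split; first by exists 0; rewrite addr0.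
  split.
    move=> x1 xs1 y1 ys1 [z1 [h1 ->]] [z2 [h2 ->]].
    by exists (z1 + z2); split; [apply: AD|rewrite addrACA].
  move=> k x1 xs1 [z1 [h1 ->]].
  by exists (k *: z1); split; [apply: AZ|rewrite scalerDr].
have monoB : mono_rel (rinv (id_plus (rinv A))).
  move=> x1 xs1 y1 ys1 [z1 [h1 ->]] [z2 [h2 ->]].
  have := maxA.1 _ _ _ _ h1 h2; have := dot_ge0 (xs1 - ys1).
  rewrite !(dotDl, dotDr, dotNl, dotNr); lra.
have Buv : rinv (id_plus (rinv A)) (x - a - r^-1 *: b) v by exists z.
rewrite (qB_val linB monoB Buv) /moreau_env.
apply/le_anti/andP; split.
  apply: ge_ereal_inf; exists (f (z + a)%R + (r / 2 * dot (z + a - x) (z + a - x))%:E)%E.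
    by exists (z + a).
  rewrite /f addrK (qB_val linA maxA.1 Azv) -!EFinM -!EFinD lee_fin.
  have := @key_id _ _ r c z v z v a b x r0' (dotC v z) hu.
  rewrite subrr !dot0l ?add0r mulr0; lra.
apply/ereal_infP => _ [y _ <-]; rewrite /f.
case: (pselect (dom A (y - a))) => [[ys hys]|nd].
  rewrite (qB_val linA maxA.1 hys) -!EFinM -!EFinD lee_fin.
  have sym : dot ys z = dot (y - a) v by rewrite dotC (symA _ _ _ _ hys Azv).
  have := @key_id _ _ r c (y - a) ys z v a b x r0' sym hu.
  rewrite subrK.
  have := maxA.1 _ _ _ _ hys Azv; rewrite (dotC (ys - v)) => hm.
  have : 0 <= r / 2 * (dot (y - a - z) (ys - v) + dot (y - a - z) (y - a - z)).
    by apply: mulr_ge0; [lra|apply: addr_ge0 => //; apply: dot_ge0].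
  lra.
have -> : qB A (y - a) = +oo%E by rewrite /qB; case: pselect.
have -> : (r%:E * +oo = +oo :> \bar R)%E by rewrite muleC gt0_mulye ?lte_fin.
rewrite (@addye _ (dot b y + c)%:E) // (@addye _ (r / 2 * dot (y - x) (y - x))%:E) //; exact: leey.
Qed.
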